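(* Let $R$ be a ring, $M$ a Tate $R$-module and $T\in\operatorname{End}M$ a continuous endomorphism. The following are equivalent: (i) $T^n\to0$ as $n\to\infty$, meaning that for all lattices $L,L'\subset M$ there exists $N$ such that $T^nL'\subset L$ for all $n>N$; (ii) there exists a (unique) structure of topological $R[[t]]$-module on $M$ (extending its topological $R$-module structure, $R[[t]]$ having the $t$-adic topology) such that $T$ acts as multiplication by $t$.
   Context: A Tate $R$-module is a topological direct summand of $P\oplus Q^*$ with $P$ a discrete projective left $R$-module, $Q$ a discrete projective right $R$-module and $Q^*=\operatorname{Hom}_R(Q,R)$ with the topology of pointwise convergence. A lattice in $M$ is an open submodule $L$ such that $L/U$ is finitely generated for every open submodule $U\subset L$. *)

(* Defs.v *)
From HB Require Import structures.
From mathcomp Require Import all_boot all_algebra.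

Set Implicit Arguments.
Unset Strict Implicit.
Unset Printing Implicit Defensive.

Import GRing.Theory.
Local Open Scope ring_scope.

(* [op] is a topology on [T]: open sets are stable under extensional
   equality, the whole space is open, finite intersections and arbitrary
   unions of opens are open (so the empty set, the empty union, is open). *)
Definition topology (T : Type) (op : (T -> Prop) -> Prop) : Prop :=
  [/\ forall U V : T -> Prop, (forall x, U x <-> V x) -> op U -> op V,
      op (fun _ => True),
      forall U V, op U -> op V -> op (fun x => U x /\ V x) &
      forall F : (T -> Prop) -> Prop, (forall U, F U -> op U) ->
        op (fun x => exists2 U, F U & U x)].

Definition cont (A B : Type) (opA : (A -> Prop) -> Prop)
  (opB : (B -> Prop) -> Prop) (f : A -> B) : Prop :=
  forall V, opB V -> opA (fun x => V (f x)).

Definition cont_on (A B : Type) (opA : (A -> Prop) -> Prop) (X : A -> Prop)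
  (opB : (B -> Prop) -> Prop) (f : A -> B) : Prop :=
  forall V, opB V -> exists2 U, opA U & forall x, X x -> (U x <-> V (f x)).

Definition discrete_top (T : Type) : (T -> Prop) -> Prop := fun _ => True.

Definition prod_top (A B : Type) (opA : (A -> Prop) -> Prop)
  (opB : (B -> Prop) -> Prop) : (A * B -> Prop) -> Prop :=
  fun W => forall x, W x -> exists U, exists V,
     [/\ opA U, opB V, U x.1, V x.2 & forall y, U y.1 -> V y.2 -> W y].

(* topology of pointwise convergence on maps [Q -> S], [S] discrete *)
Definition pointwise_top (Q : eqType) (S : Type) : ((Q -> S) -> Prop) -> Prop :=
  fun W => forall f, W f -> exists qs : seq Q,
     forall g, (forall q, q \in qs -> g q = f q) -> W g.

Definition top_lmod (S : pzRingType) (M : lmodType S)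
  (op : (M -> Prop) -> Prop) : Prop :=
  [/\ topology op,
      cont (prod_top op op) op (fun x : M * M => x.1 + x.2),
      cont op op (fun x : M => - x) &
      cont (prod_top (@discrete_top S) op) op (fun x : S * M => x.1 *: x.2)].

Definition projective (S : pzRingType) (P : lmodType S) : Prop :=
  forall (A B : lmodType S) (g : {linear A -> B}) (h : {linear P -> B}),
    (forall b, exists a, g a = b) ->
    exists k : {linear P -> A}, forall x, g (k x) = h x.

(* right R-modules are left R^c-modules; for [Q : lmodType R^c],
   [r *: q] is the right action q.r.  [rdual f] : f is an element of
   Q^* = Hom_R(Q, R) (right R-linear). *)
Definition rdual (R : pzRingType) (Q : lmodType R^c) (f : Q -> R) : Prop :=
  forall (r : R^c) (x y : Q), f (r *: x + y) = f x * (r : R) + f y.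

(* left R-module operations on P (+) Q^*, represented inside P * (Q -> R);
   (r.f)(q) = r * f q *)
Definition ts_add (R : pzRingType) (P : lmodType R) (Q : Type)
  (x y : P * (Q -> R)) : P * (Q -> R) := (x.1 + y.1, fun q => x.2 q + y.2 q).
Definition ts_scale (R : pzRingType) (P : lmodType R) (Q : Type)
  (r : R) (x : P * (Q -> R)) : P * (Q -> R) := (r *: x.1, fun q => r * x.2 q).

(* Tate R-module: a topological direct summand (= continuous linear retract)
   of P (+) Q^*, P discrete projective left module, Q discrete projective
   right module, Q^* with the topology of pointwise convergence. *)
Definition tate (R : pzRingType) (M : lmodType R) (op : (M -> Prop) -> Prop)
  : Prop :=
  top_lmod op /\
  exists (P : lmodType R) (Q : lmodType R^c)
         (i : M -> P * (Q -> R)) (p : P * (Q -> R) -> M),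
  [/\ projective P, projective Q,
      (forall m, rdual (i m).2),
      (forall r m m', i (r *: m + m') = ts_add (ts_scale r (i m)) (i m')) &
      (forall r x y, rdual x.2 -> rdual y.2 ->
          p (ts_add (ts_scale r x) y) = r *: p x + p y)] /\
  [/\
      cont op (prod_top (@discrete_top P) (@pointwise_top Q R)) i,
      cont_on (prod_top (@discrete_top P) (@pointwise_top Q R))
              (fun x => rdual x.2) op p &
      forall m, p (i m) = m].

Definition submod (R : pzRingType) (M : lmodType R) (L : M -> Prop) : Prop :=
  [/\ L 0, forall x y, L x -> L y -> L (x + y) &
      forall (r : R) x, L x -> L (r *: x)].

(* L/U is a finitely generated R-module (U a submodule of L) *)
Definition fg_quot (R : pzRingType) (M : lmodType R) (L U : M -> Prop) : Prop :=
  exists xs : seq M, (forall x, x \in xs -> L x) /\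
    forall x, L x -> exists c : 'I_(size xs) -> R, exists2 u, U u &
      x = \sum_(i < size xs) c i *: nth 0 xs i + u.

Definition lattice (R : pzRingType) (M : lmodType R) (op : (M -> Prop) -> Prop)
  (L : M -> Prop) : Prop :=
  [/\ submod L, op L &
      forall U, submod U -> op U -> (forall x, U x -> L x) -> fg_quot L U].

Definition tends_to_zero (R : pzRingType) (M : lmodType R)
  (op : (M -> Prop) -> Prop) (T : M -> M) : Prop :=
  forall L L', lattice op L -> lattice op L' ->
    exists N : nat, forall n, (N < n)%N -> forall x, L' x -> L (iter n T x).

Definition pser_add (R : pzRingType) (f g : nat -> R) : nat -> R :=
  fun n => f n + g n.
Definition pser_mul (R : pzRingType) (f g : nat -> R) : nat -> R :=
  fun n => \sum_(i < n.+1) f i * g (n - i)%N.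
Definition pser_C (R : pzRingType) (r : R) : nat -> R :=
  fun n => if n == 0%N then r else 0.
Definition pser_one (R : pzRingType) : nat -> R := pser_C 1.
Definition pser_t (R : pzRingType) : nat -> R :=
  fun n => if n == 1%N then 1 else 0.

Definition tadic_top (R : pzRingType) : ((nat -> R) -> Prop) -> Prop :=
  fun W => forall f, W f -> exists N : nat,
    forall g, (forall n, (n < N)%N -> g n = f n) -> W g.

Definition pser_structure (R : pzRingType) (M : lmodType R)
  (op : (M -> Prop) -> Prop) (T : M -> M) (act : (nat -> R) -> M -> M) : Prop :=
  [/\ forall f x y, act f (x + y) = act f x + act f y,
      forall f g x, act (pser_add f g) x = act f x + act g x,
      forall f g x, act (pser_mul f g) x = act f (act g x),
      forall x, act (@pser_one R) x = x &
      forall r x, act (pser_C r) x = r *: x] /\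
  [/\
      forall x, act (@pser_t R) x = T x &
      cont (prod_top (@tadic_top R) op) op (fun z => act z.1 z.2)].

(* Main.v *)
Require Import Defs.
From HB Require Import structures.
From mathcomp Require Import all_boot all_algebra.
From mathcomp Require Import finmap.
From mathcomp.multinomials Require Import monalg.
From mathcomp Require Import zify.
From Stdlib Require Import ClassicalEpsilon FunctionalExtensionality PropExtensionality Classical.

Set Implicit Arguments.
Unset Strict Implicit.
Unset Printing Implicit Defensive.
Import GRing.Theory.
Local Open Scope ring_scope.


Section FreeMod.
Context (K : choiceType) (S : pzRingType).
Definition fmod := malg K S.
HB.instance Definition _ := GRing.Zmodule.on fmod.
Definition fmscale (c : S) (g : fmod) : fmod :=
  \sum_(k <- msupp g) << c * g@_k *g k >>.
Lemma fmscaleE c g k : (fmscale c g)@_k = c * g@_k.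
Proof.
rewrite /fmscale {3}[g]monalgE !raddf_sum mulr_sumr.
by apply/eq_bigr=> /= i _; rewrite !mcoeffU mulrnAr.
Qed.
Lemma fmscaleA c1 c2 g : fmscale c1 (fmscale c2 g) = fmscale (c1 * c2) g.
Proof. by apply/malgP=> x; rewrite !fmscaleE mulrA. Qed.
Lemma fmscale1r D: fmscale 1 D = D.
Proof. by apply/malgP=> k; rewrite !fmscaleE mul1r. Qed.
Lemma fmscaleDr c g1 g2 : fmscale c (g1 + g2) = fmscale c g1 + fmscale c g2.
Proof. by apply/malgP=> k; rewrite !(mcoeffD, fmscaleE) mulrDr. Qed.
Lemma fmscaleDl g c1 c2: fmscale (c1 + c2) g = fmscale c1 g + fmscale c2 g.
Proof. by apply/malgP=> x; rewrite !(mcoeffD, fmscaleE) mulrDl. Qed.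
HB.instance Definition _ := GRing.Zmodule_isLmodule.Build S fmod
  fmscaleA fmscale1r fmscaleDr fmscaleDl.
Lemma fmcoeffZ c (g : fmod) k : (c *: g)@_k = c * g@_k.
Proof. exact: fmscaleE. Qed.
End FreeMod.

Section DualBasis.
Context (S : pzRingType) (Q : lmodType S).
Definition gsum (c : fmod Q S) : Q := \sum_(k <- msupp c) c@_k *: k.
Lemma gsumEw (c : fmod Q S) (D : {fset Q}) : (msupp c `<=` D)%fset ->
  gsum c = \sum_(k <- D) c@_k *: k.
Proof.
move=> sub; rewrite /gsum; apply: big_fset_incl => // x _ xn.
by rewrite mcoeff_outdom // scale0r.
Qed.
Lemma gsum_lin : linear gsum.
Proof.
move=> r c d.
set D := (msupp (r *: c + d) `|` (msupp c `|` msupp d))%fset.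
have s1 : (msupp (r *: c + d) `<=` D)%fset by apply: fsubsetUl.
have s2 : (msupp c `<=` D)%fset.
  by apply: fsubset_trans (fsubsetUr _ _); apply: fsubsetUl.
have s3 : (msupp d `<=` D)%fset.
  by apply: fsubset_trans (fsubsetUr _ _); apply: fsubsetUr.
rewrite (gsumEw s1) (gsumEw s2) (gsumEw s3) scaler_sumr -big_split /=.
apply: eq_bigr => k _; rewrite mcoeffD fmcoeffZ scalerDl scalerA //.
Qed.
HB.instance Definition _ := GRing.isLinear.Build S (fmod Q S) Q *:%R gsum gsum_lin.

Lemma dual_basis : projective Q ->
  exists (phi : Q -> Q -> S) (supp : Q -> seq Q),
   [/\ forall x, uniq (supp x),
       forall x j, j \notin supp x -> phi j x = 0,
       forall j r x y, phi j (r *: x + y) = r * phi j x + phi j y &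
       forall x, x = \sum_(j <- supp x) phi j x *: j].
Proof.
move=> pQ.
have surj : forall b : Q, exists a : fmod Q S, gsum a = b.
  move=> b; exists << 1 *g b >>.
  rewrite (@gsumEw _ [fset b]%fset); last by rewrite msuppU_le.
  by rewrite big_seq_fset1 mcoeffUU scale1r.
have [k hk] := pQ (fmod Q S) Q gsum idfun surj.
exists (fun j x => (k x)@_j), (fun x => enum_fset (msupp (k x))); split.
- by move=> x; apply: fset_uniq.
- by move=> x j hj; apply: mcoeff_outdom.
- by move=> j r x y; rewrite linearP /= mcoeffD fmcoeffZ.
- move=> x; have := hk x; rewrite /= => e; rewrite -{1}e.
  by rewrite /gsum.  
Qed.
End DualBasis.
Lemma le_max_seq (I : eqType) (f : I -> nat) (s : seq I) x :
  x \in s -> (f x <= \max_(y <- s) f y)%N.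
Proof.
elim: s => [//|a s ih]; rewrite in_cons big_cons => /orP[/eqP ->|/ih h].
  exact: leq_maxl.
exact: leq_trans h (leq_maxr _ _).
Qed.

Lemma zmod_helper (V : zmodType) (a b c : V) : a + (b + c) - b = c + a.
Proof. by rewrite addrC addrCA addKr addrC. Qed.

Lemma zmod_helper2 (V : zmodType) (a b c : V) : a + b - (a - c) = b + c.
Proof. by rewrite opprB [a + b]addrC -addrA [a + (c - a)]addrC subrK. Qed.

Section Main.
Variables (R : pzRingType) (M : lmodType R) (op : (M -> Prop) -> Prop).
Variables (P : lmodType R) (Q : lmodType R^c) (i : M -> P * (Q -> R))
  (p : P * (Q -> R) -> M).
Hypothesis topM : top_lmod op.
Hypothesis idual : forall m, rdual (i m).2.
Hypothesis ilin : forall r m m', i (r *: m + m') = ts_add (ts_scale r (i m)) (i m').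
Hypothesis plin : forall r x y, rdual x.2 -> rdual y.2 ->
  p (ts_add (ts_scale r x) y) = r *: p x + p y.
Hypothesis icont : cont op (prod_top (@discrete_top P) (@pointwise_top Q R)) i.
Hypothesis pcont : cont_on (prod_top (@discrete_top P) (@pointwise_top Q R))
  (fun x => rdual x.2) op p.
Hypothesis pi : forall m, p (i m) = m.

Lemma iP1 r m m' : (i (r *: m + m')).1 = r *: (i m).1 + (i m').1.
Proof. by rewrite ilin. Qed.
Lemma iP2 r m m' q : (i (r *: m + m')).2 q = r * (i m).2 q + (i m').2 q.
Proof. by rewrite ilin. Qed.
Lemma i0_1 : (i 0).1 = 0.
Proof.
have := iP1 1 0 0; rewrite !scale1r addr0 => h.
by apply: (@addrI _ (i 0).1); rewrite addr0 -h.
Qed.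
Lemma i0_2 q : (i 0).2 q = 0.
Proof.
have := iP2 1 0 0 q; rewrite scale1r mul1r addr0 => h.
by apply: (@addrI _ ((i 0).2 q)); rewrite addr0 -h.
Qed.
Lemma iD1 a b : (i (a + b)).1 = (i a).1 + (i b).1.
Proof. by have := iP1 1 a b; rewrite !scale1r. Qed.
Lemma iD2 a b q : (i (a + b)).2 q = (i a).2 q + (i b).2 q.
Proof. by have := iP2 1 a b q; rewrite scale1r mul1r. Qed.
Lemma iZ1 r a : (i (r *: a)).1 = r *: (i a).1.
Proof. by have := iP1 r a 0; rewrite !addr0 i0_1 addr0. Qed.
Lemma iZ2 r a q : (i (r *: a)).2 q = r * (i a).2 q.
Proof. by have := iP2 r a 0 q; rewrite !addr0 i0_2 addr0. Qed.
Lemma iN1 a : (i (- a)).1 = - (i a).1.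
Proof. by rewrite -scaleN1r iZ1 scaleN1r. Qed.
Lemma iN2 a q : (i (- a)).2 q = - (i a).2 q.
Proof. by rewrite -scaleN1r iZ2 mulN1r. Qed.
Lemma iB1 a b : (i (a - b)).1 = (i a).1 - (i b).1.
Proof. by rewrite iD1 iN1. Qed.
Lemma iB2 a b q : (i (a - b)).2 q = (i a).2 q - (i b).2 q.
Proof. by rewrite iD2 iN2. Qed.

Definition Z (F : seq Q) (m : M) : Prop :=
  (i m).1 = 0 /\ forall q, q \in F -> (i m).2 q = 0.

Lemma Z0 F : Z F 0.
Proof. by split=> [|q _]; rewrite ?i0_1 ?i0_2. Qed.
Lemma ZD F a b : Z F a -> Z F b -> Z F (a + b).
Proof.
move=> [a1 a2] [b1 b2]; split=> [|q hq]; first by rewrite iD1 a1 b1 addr0.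
by rewrite iD2 a2 ?b2 ?addr0.
Qed.
Lemma ZZ F r a : Z F a -> Z F (r *: a).
Proof.
move=> [a1 a2]; split=> [|q hq]; first by rewrite iZ1 a1 scaler0.
by rewrite iZ2 a2 ?mulr0.
Qed.
Lemma ZN F a : Z F a -> Z F (- a).
Proof. by move=> h; rewrite -scaleN1r; apply: ZZ. Qed.
Lemma ZB F a b : Z F a -> Z F b -> Z F (a - b).
Proof. by move=> ha hb; apply: ZD => //; apply: ZN. Qed.
Lemma Zsum F (I : Type) (s : seq I) (f : I -> M) :
  (forall j, Z F (f j)) -> Z F (\sum_(j <- s) f j).
Proof.
move=> h; elim: s => [|a s ih]; first by rewrite big_nil; apply: Z0.
by rewrite big_cons; apply: ZD.
Qed.
Lemma Zsub F F' m : Z F m -> (forall q, q \in F' -> q \in F) -> Z F' m.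
Proof. by move=> [h1 h2] s; split=> // q /s /h2. Qed.
Lemma Zcat F F' m : Z F m -> Z F' m -> Z (F ++ F') m.
Proof.
by move=> [h1 h2] [_ h3]; split=> // q; rewrite mem_cat => /orP[/h2|/h3].
Qed.
Lemma Zcatl F F' m : Z (F ++ F') m -> Z F m.
Proof. by move=> h; apply: Zsub h _ => q hq; rewrite mem_cat hq. Qed.
Lemma Zcatr F F' m : Z (F ++ F') m -> Z F' m.
Proof. by move=> h; apply: Zsub h _ => q hq; rewrite mem_cat hq orbT. Qed.

Lemma sub_eq0 (V : zmodType) (a b : V) : a - b = 0 -> a = b.
Proof. by move/eqP; rewrite subr_eq0 => /eqP. Qed.

Lemma inj_Z a b : (forall q, Z [:: q] (a - b)) -> a = b.
Proof.
move=> h.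
have h1 : (i a).1 = (i b).1.
  by have [e _] := h 0; rewrite iB1 in e; apply: sub_eq0.
have h2 : (i a).2 = (i b).2.
  apply: functional_extensionality => q.
  have [_ e] := h q; have := e q; rewrite mem_seq1 eqxx iB2 => /(_ isT).
  exact: sub_eq0.
by rewrite -(pi a) -(pi b) [i a]surjective_pairing [i b]surjective_pairing h1 h2.
Qed.

Lemma open_ext U V : (forall x, U x <-> V x) -> op U -> op V.
Proof. by case: topM => [[h _ _ _] _ _ _]; apply: h. Qed.

Lemma open_Z F a : op (fun m => Z F (m - a)).
Proof.
pose V := fun z : P * (Q -> R) =>
  z.1 = (i a).1 /\ forall q, q \in F -> z.2 q = (i a).2 q.
have hV : prod_top (@discrete_top P) (@pointwise_top Q R) V.
  move=> z [z1 z2]; exists (fun u => u = z.1),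
    (fun g => forall q, q \in F -> g q = z.2 q); split=> //.
  - move=> f hf; exists F => g hg q hq; rewrite hg ?hf //.
  - by move=> y e hy; split=> [|q hq]; [rewrite e | rewrite hy ?z2].
apply: open_ext (icont hV) => m; rewrite /V /Z iB1; split.
  move=> [e1 e2]; rewrite e1 subrr; split=> // q hq.
  by rewrite iB2 e2 ?subrr.
move=> [e1 e2]; split; first by apply: sub_eq0.
by move=> q hq; apply: sub_eq0; rewrite -iB2 e2.
Qed.

Lemma p_at y W : rdual y.2 -> op W -> W (p y) -> exists qs : seq Q,
  forall z, rdual z.2 -> z.1 = y.1 -> (forall q, q \in qs -> z.2 q = y.2 q) ->
  W (p z).
Proof.
move=> hy hW hWy; have [U hU hUW] := pcont hW.
have Uy : U y by apply/hUW.
have [U1 [V1 [_ hV1 U1y V1y hUV]]] := hU y Uy.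
have [qs hqs] := hV1 _ V1y.
exists qs => z hz e1 e2; apply/hUW => //; apply: hUV; first by rewrite e1.
exact: hqs.
Qed.

Lemma open_char W a : op W -> W a -> exists F, forall m, Z F (m - a) -> W m.
Proof.
move=> hW hWa; have := p_at (idual a) hW; rewrite pi => /(_ hWa) [qs hqs].
exists qs => m [e1 e2]; rewrite -(pi m); apply: hqs => //.
  by apply: sub_eq0; rewrite -iB1.
by move=> q hq; apply: sub_eq0; rewrite -iB2 e2.
Qed.

Lemma char_open W : (forall a, W a -> exists F, forall m, Z F (m - a) -> W m) ->
  op W.
Proof.
move=> h.
pose Fam := fun U : M -> Prop => exists a F, [/\ W a,
  (forall m, Z F (m - a) -> W m) & (forall m, U m <-> Z F (m - a))].
have hF : forall U, Fam U -> op U.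
  move=> U [a [F [_ _ hU]]]; apply: open_ext (open_Z F a) => m.
  by split=> /hU.
have := (let: And4 _ _ _ hu := (let: And4 t _ _ _ := topM in t) in hu) Fam hF.
apply: open_ext => m; split.
  by move=> [U [a [F [_ hW hU]]] /hU /hW].
move=> hm; have [F hF'] := h m hm.
exists (fun x => Z F (x - m)); last by rewrite subrr; apply: Z0.
by exists m, F; split.
Qed.

Definition ev (A : nat -> Prop) := exists N, forall n, (N <= n)%N -> A n.
Lemma ev_and A B : ev A -> ev B -> ev (fun n => A n /\ B n).
Proof.
move=> [N1 h1] [N2 h2]; exists (maxn N1 N2) => n hn; split.
  by apply: h1; apply: leq_trans hn; apply: leq_maxl.
by apply: h2; apply: leq_trans hn; apply: leq_maxr.
Qed.
Lemma ev_impl (A B : nat -> Prop) : (forall n, A n -> B n) -> ev A -> ev B.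
Proof. by move=> h [N hN]; exists N => n /hN /h. Qed.

Definition cv (s : nat -> M) (a : M) := forall F, ev (fun n => Z F (s n - a)).

Lemma cv_unique s a b : cv s a -> cv s b -> a = b.
Proof.
move=> ha hb; apply: inj_Z => q.
have [N hN] := ev_and (ha [:: q]) (hb [:: q]).
have [h1 h2] := hN N (leqnn N).
have e : a - b = (s N - b) - (s N - a).
  by rewrite opprB [RHS]addrC addrA subrK.
by rewrite e; apply: ZB.
Qed.

Lemma cv_shift s a m : cv s a -> cv (fun n => s (n + m)%N) a.
Proof.
move=> h F; have [N hN] := h F; exists N => n hn; apply: hN.
by apply: leq_trans hn (leq_addr _ _).
Qed.

Lemma cv_const s a : ev (fun n => s n = a) -> cv s a.
Proof. by move=> [N hN] F; exists N => n /hN ->; rewrite subrr; apply: Z0. Qed.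

Lemma cv_add s s' a b : cv s a -> cv s' b -> cv (fun n => s n + s' n) (a + b).
Proof.
move=> ha hb F; apply: ev_impl (ev_and (ha F) (hb F)) => n [h1 h2].
by rewrite opprD addrACA; apply: ZD.
Qed.

Lemma cv_ext s s' a : (forall n, s n = s' n) -> cv s a -> cv s' a.
Proof. by move=> e h F; apply: ev_impl (h F) => n; rewrite e. Qed.

Lemma cv_Z s a F : cv s a -> ev (fun n => Z F (s n)) -> Z F a.
Proof.
move=> h1 h2; have [N hN] := ev_and (h1 F) h2; have [e1 e2] := hN N (leqnn N).
have -> : a = s N - (s N - a) by rewrite opprB addrC subrK.
exact: ZB.
Qed.

Lemma cv_exists s : (forall F, exists N, forall n, (N <= n)%N -> Z F (s n - s N)) ->
  exists a, cv s a.
Proof.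
move=> h.
pose Nq := fun q : Q => proj1_sig (constructive_indefinite_description _ (h [:: q])).
have hNq : forall q n, (Nq q <= n)%N -> (i (s n)).2 q = (i (s (Nq q))).2 q.
  move=> q n hn; have := proj2_sig (constructive_indefinite_description _ (h [:: q])).
  move=> /(_ n hn) [_ e]; apply: sub_eq0; rewrite -iB2; apply: e.
  by rewrite mem_seq1.
have [N0 hN0] := h [::].
have h0 : forall n, (N0 <= n)%N -> (i (s n)).1 = (i (s N0)).1.
  by move=> n /hN0 [e _]; apply: sub_eq0; rewrite -iB1.
pose y := ((i (s N0)).1, fun q => (i (s (Nq q))).2 q).
have ry : rdual y.2.
  move=> r x z /=.
  pose n := maxn (Nq x) (maxn (Nq z) (Nq (r *: x + z))).
  have l1 : (Nq x <= n)%N by apply: leq_maxl.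
  have l2 : (Nq z <= n)%N by rewrite /n maxnCA leq_maxl.
  have l3 : (Nq (r *: x + z)%R <= n)%N by rewrite /n maxnA leq_maxr.
  by rewrite -(hNq _ _ l1) -(hNq _ _ l2) -(hNq _ _ l3) idual.
exists (p y) => F.
have := p_at (W := fun m => Z F (m - p y)) ry (open_Z F (p y)).
rewrite subrr => /(_ (Z0 F)) [qs hqs].
exists (maxn N0 (\max_(q <- qs) Nq q)) => n hn.
rewrite -(pi (s n)); apply: hqs => //=.
  by apply: h0; apply: leq_trans (leq_maxl _ _) hn.
move=> q hq; apply: hNq; apply: leq_trans _ hn; apply: leq_trans (leq_maxr N0 _).
exact: le_max_seq.
Qed.

Definition lim (s : nat -> M) : M := epsilon (inhabits 0) (fun a => cv s a).
Lemma lim_cv s : (exists a, cv s a) -> cv s (lim s).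
Proof. by move=> h; rewrite /lim; apply: epsilon_spec. Qed.
Lemma lim_eq s a : cv s a -> lim s = a.
Proof. move=> h; have h2 : cv s (lim s) by apply: lim_cv; exists a.
exact: cv_unique h2 h. Qed.



Section Lat.
Variables (phi : Q -> Q -> R^c) (supp : Q -> seq Q).
Hypothesis suniq : forall x, uniq (supp x).
Hypothesis sout : forall x j, j \notin supp x -> phi j x = 0.
Hypothesis slin : forall j r x y, phi j (r *: x + y) = r * phi j x + phi j y.
Hypothesis sdec : forall x, x = \sum_(j <- supp x) phi j x *: j.

Definition phr (j x : Q) : R := phi j x.

Lemma slinR j (r : R^c) x y :
  phr j (r *: x + y) = phr j x * (r : R) + phr j y.
Proof. exact: slin. Qed.

Lemma soutR x j : j \notin supp x -> phr j x = 0.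
Proof. exact: sout. Qed.

Lemma rdual_props (g : Q -> R) : rdual g ->
  [/\ g 0 = 0, forall a b, g (a + b) = g a + g b &
      forall (r : R^c) a, g (r *: a) = g a * (r : R)].
Proof.
move=> h.
have g0 : g 0 = 0.
  have := h 1 0 0; rewrite scaler0 addr0 mulr1 => e.
  by apply: (@addrI _ (g 0)); rewrite addr0 -e.
split=> //.
  by move=> a b; have := h 1 a b; rewrite scale1r mulr1.
by move=> r a; have := h r a 0; rewrite addr0 g0 addr0.
Qed.

Lemma rdual_dec (g : Q -> R) : rdual g ->
  forall x, g x = \sum_(j <- supp x) g j * phr j x.
Proof.
move=> h x; have [g0 gD gZ] := rdual_props h.
rewrite {1}[x]sdec; elim: (supp x) => [|a s ih]; first by rewrite !big_nil g0.
by rewrite !big_cons gD gZ ih.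
Qed.

Definition S (c : Q -> R) (x : Q) : R := \sum_(j <- supp x) c j * phr j x.

Lemma sum_supp (s : seq Q) x c : uniq s -> {subset supp x <= s} ->
  \sum_(j <- s) c j * phr j x = S c x.
Proof.
move=> us sub.
have -> : \sum_(j <- s) c j * phr j x =
          \sum_(j <- s | j \in supp x) c j * phr j x.
  by symmetry; apply: big_rmcond_in => j _ hj; rewrite soutR // mulr0.
rewrite -big_filter /S; apply: perm_big; apply: uniq_perm.
- exact: filter_uniq.
- exact: suniq.
- move=> j; rewrite mem_filter; apply/andP/idP => [[]//|hj].
  by split=> //; apply: sub.
Qed.

Lemma S_rdual c : rdual (S c).
Proof.
move=> r x y.
pose s := undup (supp (r *: x + y) ++ supp x ++ supp y).
have us : uniq s by apply: undup_uniq.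
have s1 : {subset supp (r *: x + y) <= s}.
  by move=> j hj; rewrite mem_undup mem_cat hj.
have s2 : {subset supp x <= s}.
  by move=> j hj; rewrite mem_undup !mem_cat hj orbT.
have s3 : {subset supp y <= s}.
  by move=> j hj; rewrite mem_undup !mem_cat hj !orbT.
rewrite -(sum_supp c us s1) -(sum_supp c us s2) -(sum_supp c us s3).
rewrite mulr_suml -big_split /=; apply: eq_bigr => j _.
by rewrite slinR mulrDr mulrA.
Qed.

Lemma S_lin (r : R) c d x :
  S (fun j => r * c j + d j) x = r * S c x + S d x.
Proof.
rewrite /S mulr_sumr -big_split /=; apply: eq_bigr => j _.
by rewrite mulrDl mulrA.
Qed.

Lemma S_dec g : rdual g -> S g = g.
Proof. by move=> h; apply: functional_extensionality => x; rewrite (rdual_dec h). Qed.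

Lemma S_vanish c q : (forall j, j \in supp q -> c j = 0) -> S c q = 0.
Proof. by move=> h; rewrite /S big1_seq // => j /andP[_ /h ->]; rewrite mul0r. Qed.

Definition delta (j : Q) : Q -> R := fun j' => if j' == j then 1 else 0.

Lemma S_delta j x : S (delta j) x = phr j x.
Proof.
pose s := undup (j :: supp x).
have us : uniq s by apply: undup_uniq.
have sx : {subset supp x <= s} by move=> k hk; rewrite mem_undup in_cons hk orbT.
rewrite -(sum_supp _ us sx) (bigD1_seq j) //=; last by rewrite mem_undup mem_head.
rewrite big1 ?addr0 /delta ?eqxx ?mul1r // => k /negbTE ->; by rewrite mul0r.
Qed.

Lemma sum_delta (s : seq Q) (c : Q -> R) j' : uniq s ->
  \sum_(j <- s) c j * delta j j' = if j' \in s then c j' else 0.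
Proof.
elim: s => [|a s ih]; first by rewrite big_nil.
rewrite big_cons in_cons /= => /andP[na us]; rewrite ih // /delta.
case: eqP => [->|_]; last by rewrite mulr0 add0r.
by rewrite (negbTE na) mulr1 addr0.
Qed.

Definition pic (c : Q -> R) : M := p (0, S c).

Lemma p00 : p (0, fun _ => 0) = 0.
Proof.
rewrite -[RHS](pi 0) [i 0]surjective_pairing i0_1; congr (p (0, _)).
by apply: functional_extensionality => q; rewrite i0_2.
Qed.

Lemma pic_lin (r : R) c d : pic (fun j => r * c j + d j) = r *: pic c + pic d.
Proof.
rewrite /pic -(@plin r (0, S c) (0, S d) (S_rdual c) (S_rdual d)); congr p; rewrite /ts_add /ts_scale /=.
rewrite scaler0 addr0; congr pair; apply: functional_extensionality => q.
exact: S_lin.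
Qed.

Lemma pic0 : pic (fun _ => 0) = 0.
Proof.
rewrite /pic -p00; congr (p (0, _)); apply: functional_extensionality => q.
by rewrite /S big1 // => j _; rewrite mul0r.
Qed.

Lemma pic_seq (s : seq Q) (c : Q -> R) :
  pic (fun j' => \sum_(j <- s) c j * delta j j') = \sum_(j <- s) c j *: pic (delta j).
Proof.
elim: s => [|a s ih].
  rewrite big_nil -pic0; congr pic; apply: functional_extensionality => j'.
  by rewrite big_nil.
rewrite big_cons -ih -pic_lin; congr pic; apply: functional_extensionality => j'.
by rewrite big_cons.
Qed.

Lemma pic_at W : op W -> W 0 -> exists qs : seq Q,
  forall c, (forall q j, q \in qs -> j \in supp q -> c j = 0) -> W (pic c).
Proof.
move=> hW hW0.
have ry : rdual (0 : P, fun _ : Q => 0 : R).2 by move=> r x y /=; rewrite mul0r addr0.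
have := p_at ry hW; rewrite p00 => /(_ hW0) [qs hqs].
exists qs => c hc; apply: hqs => //=; first exact: S_rdual.
by move=> q hq; apply: S_vanish => j hj; apply: (hc q).
Qed.

Lemma mem_flat (qs : seq Q) q j : q \in qs -> j \in supp q ->
  j \in flatten (map supp qs).
Proof.
elim: qs => [//|a qs ih]; rewrite in_cons /= mem_cat => /orP[/eqP -> ->//|hq hj].
by rewrite ih ?orbT.
Qed.

Lemma lattice_in F : exists L, lattice op L /\ forall m, L m -> Z F m.
Proof.
have := pic_at (W := fun m => Z F (m - 0)) (open_Z F 0).
rewrite subrr => /(_ (Z0 F)) [qs hqs].
pose G := flatten (map supp qs).
pose L := fun m => exists c, (forall j, j \in G -> c j = 0) /\ m = pic c.
have sL : submod L.
  split.
  - by exists (fun _ => 0); split=> //; rewrite pic0.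
  - move=> x y [c [hc ->]] [d [hd ->]]; exists (fun j => 1 * c j + d j); split.
      by move=> j hj; rewrite hc ?hd ?mulr0 ?addr0.
    by rewrite pic_lin scale1r.
  - move=> r x [c [hc ->]]; exists (fun j => r * c j + 0); split.
      by move=> j hj; rewrite hc ?mulr0 ?addr0.
    by rewrite pic_lin pic0 addr0.
have [sL0 sLD sLZ] := sL.
exists L; split; last first.
  move=> m [c [hc ->]]; have := hqs c; rewrite subr0; apply.
  by move=> q j hq hj; apply: hc; apply: mem_flat hq hj.
split=> //.
  apply: char_open => a [c [hc ->]]; exists G => m [e1 e2].
  pose g := (i (m - pic c)).2.
  have hd : m - pic c = pic g.
    rewrite -[LHS]pi [i _]surjective_pairing e1 [RHS]/pic; congr (p (0, _)).
    by rewrite S_dec //; apply: idual.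
  have -> : m = pic c + pic g by rewrite -hd addrC subrK.
  apply: sLD; first by exists c.
  by exists g; split=> // j /e2.
move=> U [sU0 sUD sUZ] hU subU.
have [qsU hqsU] := pic_at hU sU0.
pose G2 := flatten (map supp qsU).
pose fil := [seq j <- undup G2 | j \notin G].
pose xs := map (fun j => pic (delta j)) fil.
exists xs; split.
  move=> x /mapP [j hj ->]; exists (delta j); split=> //.
  move: hj; rewrite mem_filter => /andP [hjG _] k hk.
  rewrite /delta; case: eqP => // e; by rewrite -e hk in hjG.
move=> x [c [hc ->]].
exists (fun k : 'I_(size xs) => c (nth 0 fil k)).
pose c' := fun j => if j \in G2 then 0 else c j.
exists (pic c').
  apply: hqsU => q j hq hj; rewrite /c' (mem_flat hq hj) //.
have ufil : uniq fil by apply: filter_uniq; apply: undup_uniq.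
have ce : c = fun j' => 1 * (\sum_(j <- fil) c j * delta j j') + c' j'.
  apply: functional_extensionality => j'; rewrite mul1r sum_delta // /c'.
  rewrite mem_filter mem_undup.
  case: (boolP (j' \in G2)) => h2; last by rewrite andbF add0r.
  rewrite andbT addr0; case: (boolP (j' \in G)) => //= h1.
  by rewrite hc.
rewrite {1}ce pic_lin scale1r pic_seq; congr (_ + _).
rewrite [LHS](big_nth 0) -[size fil](size_map (fun j => pic (delta j))) big_mkord.
apply: eq_bigr => k _; rewrite (nth_map 0) //.
by rewrite -(size_map (fun j => pic (delta j))).
Qed.

End Lat.

Lemma lattice_in' : projective Q -> forall F, exists L, lattice op L /\ forall m, L m -> Z F m.
Proof.
move=> pQ F; have [phi [supp [h1 h2 h3 h4]]] := dual_basis pQ.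
exact: (lattice_in h1 h2 h3 h4).
Qed.

Lemma lattice_Zsub L : lattice op L -> exists G, forall m, Z G m -> L m.
Proof.
move=> [[sL0 _ _] hL _]; have [G hG] := open_char hL sL0.
by exists G => m hm; apply: hG; rewrite subr0.
Qed.

Lemma open_and U V : op U -> op V -> op (fun x => U x /\ V x).
Proof. by case: topM => [[_ _ h _] _ _ _]; apply: h. Qed.

Lemma lattice_ext L x : lattice op L ->
  lattice op (fun m => exists l r, L l /\ m = l + r *: x).
Proof.
move=> [[sL0 sLD sLZ] hL fgL].
pose L' := fun m => exists l r, L l /\ m = l + r *: x.
have sL' : submod L'.
  split.
  - by exists 0, 0; split=> //; rewrite scale0r addr0.
  - move=> a b [l1 [r1 [h1 ->]]] [l2 [r2 [h2 ->]]]; exists (l1 + l2), (r1 + r2).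
    by split; [apply: sLD | rewrite scalerDl addrACA].
  - move=> r a [l [s [h ->]]]; exists (r *: l), (r * s).
    by split; [apply: sLZ | rewrite scalerDr scalerA].
split=> //.
  apply: char_open => a [l [r [hl ->]]].
  have [G hG] := open_char hL hl; exists G => m hm.
  exists (m - r *: x), r; split; last by rewrite subrK.
  apply: hG; have -> : m - r *: x - l = m - (l + r *: x).
    by rewrite opprD addrA addrAC.
  exact: hm.
move=> U [sU0 sUD sUZ] hU subU.
pose U' := fun m => L m /\ U m.
have sU' : submod U'.
  split; first by split.
  - by move=> a b [h1 h2] [h3 h4]; split; [apply: sLD | apply: sUD].
  - by move=> r a [h1 h2]; split; [apply: sLZ | apply: sUZ].
have [xs [hxs hdec]] := fgL U' sU' (open_and hL hU) (fun m h => h.1).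
exists (x :: xs); split.
  move=> y; rewrite in_cons => /orP[/eqP ->|hy].
    by exists 0, 1; split=> //; rewrite scale1r add0r.
  by exists y, 0; split; [apply: hxs | rewrite scale0r addr0].
move=> m [l [r [hl ->]]].
have [c [u [hu1 hu2] hl']] := hdec l hl.
exists (fun k : 'I_(size (x :: xs)) => if unlift ord0 k is Some k' then c k' else r).
exists u => //.
rewrite big_ord_recl /= unlift_none hl' -addrA [u + _]addrC addrA; congr (_ + _).
rewrite addrC; congr (_ + _); apply: eq_bigr => k _.
by rewrite liftK.
Qed.

Section WithT.
Variable T : {linear M -> M}.
Hypothesis Tcont : cont op op T.

Lemma iterZD n (r : R) a b : iter n T (r *: a + b) = r *: iter n T a + iter n T b.
Proof. by elim: n => [//|n ih] /=; rewrite ih linearP. Qed.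
Lemma iter0v n : iter n T 0 = 0.
Proof. by elim: n => [//|n ih] /=; rewrite ih linear0. Qed.
Lemma iterD' n a b : iter n T (a + b) = iter n T a + iter n T b.
Proof. by have := iterZD n 1 a b; rewrite !scale1r. Qed.
Lemma iterZ' n r a : iter n T (r *: a) = r *: iter n T a.
Proof. by have := iterZD n r a 0; rewrite !addr0 iter0v addr0. Qed.
Lemma iterB' n a b : iter n T (a - b) = iter n T a - iter n T b.
Proof. by rewrite -scaleN1r iterD' iterZ' scaleN1r. Qed.
Lemma iter_sum n (I : Type) (s : seq I) (f : I -> M) :
  iter n T (\sum_(j <- s) f j) = \sum_(j <- s) iter n T (f j).
Proof.
elim: s => [|a s ih]; first by rewrite !big_nil iter0v.
by rewrite !big_cons iterD' ih.
Qed.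

Lemma Z_cont F : exists G, forall z, Z G z -> Z F (T z).
Proof.
have := Tcont (open_Z F 0) => h.
have := open_char (a := 0) h; rewrite /= linear0 subrr => /(_ (Z0 F)) [G hG].
by exists G => z hz; have := hG z; rewrite !subr0; apply.
Qed.

Lemma Z_iter n F : exists G, forall z, Z G z -> Z F (iter n T z).
Proof.
elim: n F => [|n ih] F; first by exists F.
have [G1 h1] := Z_cont F; have [G h] := ih G1.
by exists G => z /h /h1.
Qed.

Lemma Z_iter_upto N F : exists G, forall n, (n <= N)%N -> forall z, Z G z ->
  Z F (iter n T z).
Proof.
elim: N => [|N [G ih]].
  have [G h] := Z_iter 0 F; exists G => n; rewrite leqn0 => /eqP -> //.
have [G1 h1] := Z_iter N.+1 F; exists (G ++ G1) => n; rewrite leq_eqVlt.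
case/orP => [/eqP -> z /Zcatr /h1 //|hn z /Zcatl hz]; exact: ih hn z hz.
Qed.

Lemma tzA : projective Q -> tends_to_zero op T ->
  forall x F, exists N, forall n, (N <= n)%N -> Z F (iter n T x).
Proof.
move=> pQ tz x F.
have [L [hL LZ]] := lattice_in' pQ F.
have [L0 [hL0 _]] := lattice_in' pQ [::].
have hL' := lattice_ext x hL0.
have [N hN] := tz L _ hL hL'.
exists N.+1 => n hn; apply: LZ; apply: hN => //.
exists 0, 1; split; last by rewrite scale1r add0r.
by case: hL0 => [[]].
Qed.

Lemma tzB : projective Q -> tends_to_zero op T ->
  forall F, exists G, forall n z, Z G z -> Z F (iter n T z).
Proof.
move=> pQ tz F.
have [L [hL LZ]] := lattice_in' pQ F.
have [L0 [hL0 _]] := lattice_in' pQ [::].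
have [N hN] := tz L L0 hL hL0.
have [G0 hG0] := lattice_Zsub hL0.
have [G1 hG1] := Z_iter_upto N F.
exists (G0 ++ G1) => n z hz.
case: (leqP n N) => hn; first by apply: hG1 => //; apply: Zcatr hz.
by apply: LZ; apply: hN => //; apply: hG0; apply: Zcatl hz.
Qed.

Section Construct.
Hypothesis hA : forall x F, exists N, forall n, (N <= n)%N -> Z F (iter n T x).
Hypothesis hB : forall F, exists G, forall n z, Z G z -> Z F (iter n T z).

Definition ps (f : nat -> R) (x : M) (N : nat) : M :=
  \sum_(0 <= n < N) f n *: iter n T x.
Definition act (f : nat -> R) (x : M) : M := lim (ps f x).
Definition mono (m : nat) (r : R) : nat -> R := fun k => if k == m then r else 0.
Definition trunc (g : nat -> R) (N : nat) : nat -> R :=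
  fun k => if (k < N)%N then g k else 0.


Lemma Zsum_in F (I : eqType) (s : seq I) (f : I -> M) :
  (forall j, j \in s -> Z F (f j)) -> Z F (\sum_(j <- s) f j).
Proof.
elim: s => [|a s ih] h; first by rewrite big_nil; apply: Z0.
rewrite big_cons; apply: ZD; first by apply: h; rewrite mem_head.
by apply: ih => j hj; apply: h; rewrite in_cons hj orbT.
Qed.

Lemma act_cv f x : cv (ps f x) (act f x).
Proof.
apply: lim_cv; apply: cv_exists => F.
have [N hN] := hA x F; exists N => n hn.
rewrite /ps (@big_cat_nat _ _ _ N) //= addrC addrK.
apply: Zsum_in => k; rewrite mem_index_iota => /andP[hk _].
by apply: ZZ; apply: hN.
Qed.

Lemma act_eq f x a : cv (ps f x) a -> act f x = a.
Proof. exact: lim_eq. Qed.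

Lemma actDx f x y : act f (x + y) = act f x + act f y.
Proof.
apply: act_eq; apply: cv_ext (cv_add (act_cv f x) (act_cv f y)) => n.
by rewrite /ps -big_split /=; apply: eq_bigr => k _; rewrite iterD' scalerDr.
Qed.

Lemma actDf f g x : act (pser_add f g) x = act f x + act g x.
Proof.
apply: act_eq; apply: cv_ext (cv_add (act_cv f x) (act_cv g x)) => n.
by rewrite /ps -big_split /=; apply: eq_bigr => k _; rewrite scalerDl.
Qed.

Lemma ps_mono m r x n : (m < n)%N -> ps (mono m r) x n = r *: iter m T x.
Proof.
move=> hn; rewrite /ps (bigD1_seq m) /=; last exact: iota_uniq.
  by rewrite /mono eqxx big1 ?addr0 // => k /negbTE ->; rewrite scale0r.
by rewrite mem_index_iota.
Qed.

Lemma act_mono m r x : act (mono m r) x = r *: iter m T x.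
Proof. by apply: act_eq; apply: cv_const; exists m.+1 => n; apply: ps_mono. Qed.

Lemma act_Zall F f z : (forall n, Z F (f n *: iter n T z)) -> Z F (act f z).
Proof.
move=> h; apply: (cv_Z (act_cv f z)); exists 0 => n _.
by apply: Zsum => k; apply: h.
Qed.

Lemma L1 F : exists G, forall f z, Z G z -> Z F (act f z).
Proof.
have [G hG] := hB F; exists G => f z hz; apply: act_Zall => n.
by apply: ZZ; apply: hG.
Qed.

Lemma L2 x F : exists N, forall h, (forall k, (k < N)%N -> h k = 0) ->
  Z F (act h x).
Proof.
have [N hN] := hA x F; exists N => h hh; apply: act_Zall => n.
case: (ltnP n N) => hn; first by rewrite hh // scale0r; apply: Z0.
by apply: ZZ; apply: hN.
Qed.

Lemma hmono f m r k : pser_mul f (mono m r) k =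
  if (m <= k)%N then f (k - m)%N * r else 0.
Proof.
rewrite /pser_mul; case: (leqP m k) => hmk.
  have hi : (k - m < k.+1)%N by rewrite ltnS leq_subr.
  rewrite (bigD1 (Ordinal hi)) //= /mono subKn // eqxx big1 ?addr0 //.
  move=> j /eqP hj; case: eqP => [e|_]; last by rewrite mulr0.
  exfalso; apply: hj; apply: val_inj => /=; have := ltn_ord j; lia.
apply: big1 => j _; rewrite /mono; case: eqP => [e|_]; last by rewrite mulr0.
by have := ltn_ord j; lia.
Qed.

Lemma K2 f m r x : act f (r *: iter m T x) = act (pser_mul f (mono m r)) x.
Proof.
apply: act_eq; apply: cv_ext (cv_shift m (act_cv _ x)) => N.
rewrite /ps (@big_cat_nat _ _ _ m) //= ?leq_addl //.
rewrite big1_seq ?add0r; last first.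
  move=> k /andP[_]; rewrite mem_index_iota => /andP[_ hk].
  by rewrite hmono leqNgt hk scale0r.
rewrite -{1}(add0n m) big_addn addnK; apply: eq_bigr => k _.
rewrite hmono leq_addl addnK iterZ' scalerA iterD //.
Qed.

Lemma act0x f : act f 0 = 0.
Proof.
have := actDx f 0 0; rewrite addr0 => e.
by apply: (@addrI _ (act f 0)); rewrite addr0 -e.
Qed.

Lemma act_zero x : act (fun _ => 0) x = 0.
Proof.
have -> : (fun _ : nat => 0 : R) = mono 0 0.
  by apply: functional_extensionality => k; rewrite /mono; case: eqP.
by rewrite act_mono scale0r.
Qed.

Lemma K1 f g x N : act f (ps g x N) = act (pser_mul f (trunc g N)) x.
Proof.
elim: N => [|N ih].
  rewrite /ps big_geq // act0x.
  have -> : pser_mul f (trunc g 0) = fun _ => 0.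
    apply: functional_extensionality => k; rewrite /pser_mul big1 // => j _.
    by rewrite /trunc mulr0.
  by rewrite act_zero.
rewrite /ps big_nat_recr //= -/(ps g x N) actDx ih K2 -actDf.
congr act; apply: functional_extensionality => k.
rewrite /pser_add /pser_mul -big_split /=; apply: eq_bigr => j _.
rewrite -mulrDr; congr (_ * _); rewrite /trunc /mono ltnS.
by case: ltngtP => h; rewrite ?addr0 ?add0r // h.
Qed.

Lemma act_mul f g x : act (pser_mul f g) x = act f (act g x).
Proof.
apply: inj_Z => q.
have [G hG] := L1 [:: q].
have [N1 hN1] := act_cv g x G.
have [N0 hN0] := L2 x [:: q].
pose N := maxn N1 N0.
have e1 : act f (act g x) = act f (ps g x N) - act f (ps g x N - act g x).
  have e1' : act f (ps g x N) = act f (act g x) + act f (ps g x N - act g x).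
    by rewrite -actDx addrC subrK.
  by rewrite e1' addrK.
have e2 : act (pser_mul f g) x = act (pser_mul f (trunc g N)) x +
    act (pser_mul f (fun k => g k - trunc g N k)) x.
  rewrite -actDf; congr act; apply: functional_extensionality => k.
  rewrite /pser_add /pser_mul -big_split /=; apply: eq_bigr => j _.
  by rewrite -mulrDr addrC subrK.
rewrite e1 e2 K1 zmod_helper2.
apply: ZD.
  apply: hN0 => k hk; rewrite /pser_mul big1 // => j _.
  rewrite /trunc; have -> : (k - j < N)%N.
    by apply: leq_ltn_trans (leq_subr _ _) _; apply: leq_trans hk (leq_maxr _ _).
  by rewrite subrr mulr0.
by apply: hG; apply: hN1; apply: leq_maxl.
Qed.

Lemma act_cont : cont (prod_top (@tadic_top R) op) op (fun z => act z.1 z.2).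
Proof.
move=> W hW [f0 x0] /= hWa.
have [F hF] := open_char hW hWa.
have [G hG] := L1 F.
have [N hN] := L2 x0 F.
exists (fun g => forall k, (k < N)%N -> g k = f0 k), (fun y => Z G (y - x0)).
split=> //=.
- move=> g hg; exists N => g' hg' k hk; rewrite hg' // hg //.
- exact: open_Z.
- by rewrite subrr; apply: Z0.
move=> [g y] /= hg hy; apply: hF.
have eg : g = pser_add f0 (fun k => g k - f0 k).
  by apply: functional_extensionality => k; rewrite /pser_add addrC subrK.
have e : act g y - act f0 x0 = act (fun k => g k - f0 k) x0 + act g (y - x0).
  rewrite -{1}(subrK x0 y) (actDx g (y - x0) x0) [X in act X x0]eg actDf.
  exact: zmod_helper.
rewrite e; apply: ZD; first by apply: hN => k hk; rewrite hg // subrr.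
by apply: hG.
Qed.

End Construct.


Lemma zmod_helper3 (V : zmodType) (a b c : V) : (b - c) - (b - a) = a - c.
Proof. by rewrite opprB addrC addrA subrK. Qed.

Section Gen.
Variable act' : (nat -> R) -> M -> M.
Hypothesis hs : pser_structure op T act'.

Lemma g_pow m x : act' (mono m 1) x = iter m T x.
Proof.
case: hs => [[D1 D2 D3 D4 D5] [Dt Dc]].
elim: m x => [|m ih] x; first exact: D4.
have -> : mono m.+1 1 = pser_mul (@pser_t R) (mono m 1).
  apply: functional_extensionality => k; rewrite hmono /mono /pser_t.
  case: (leqP m k) => h; rewrite ?mulr1.
    have -> : (k - m == 1)%N = (k == m.+1) by apply/eqP/eqP; lia.
    by [].
  by have -> : (k == m.+1) = false by apply/eqP; lia.
by rewrite D3 ih Dt.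
Qed.

Lemma g_mono m r x : act' (mono m r) x = r *: iter m T x.
Proof.
case: hs => [[D1 D2 D3 D4 D5] [Dt Dc]].
have -> : mono m r = pser_mul (pser_C r) (mono m 1).
  apply: functional_extensionality => k; rewrite hmono /mono /pser_C.
  case: (leqP m k) => h; rewrite ?mulr1.
    have -> : (k - m == 0)%N = (k == m) by apply/eqP/eqP; lia.
    by [].
  by have -> : (k == m) = false by apply/eqP; lia.
by rewrite D3 g_pow D5.
Qed.

Lemma g_trunc f N x : act' (trunc f N) x = ps f x N.
Proof.
case: hs => [[D1 D2 D3 D4 D5] [Dt Dc]].
elim: N => [|N ih].
  have -> : trunc f 0 = mono 0 0.
    by apply: functional_extensionality => k; rewrite /trunc /mono; case: eqP.
  by rewrite g_mono scale0r /ps big_geq.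
have -> : trunc f N.+1 = pser_add (trunc f N) (mono N (f N)).
  apply: functional_extensionality => k; rewrite /pser_add /trunc /mono ltnS.
  by case: ltngtP => h; rewrite ?addr0 ?add0r // h.
by rewrite D2 ih g_mono /ps big_nat_recr.
Qed.

Lemma g_near f x F : exists N, forall g, (forall k, (k < N)%N -> g k = f k) ->
  Z F (act' g x - act' f x).
Proof.
case: hs => [[D1 D2 D3 D4 D5] [Dt Dc]].
have h := Dc _ (open_Z F (act' f x)).
have := h (f, x); rewrite /= subrr => /(_ (Z0 F)) [U [V [hU _ Uf Vx hUV]]].
have [N hN] := hU f Uf; exists N => g hg.
exact: (hUV (g, x) (hN g hg) Vx).
Qed.

End Gen.

Lemma uniq_struct act1 act2 : pser_structure op T act1 -> pser_structure op T act2 ->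
  forall f x, act1 f x = act2 f x.
Proof.
move=> h1 h2 f x; apply: inj_Z => q.
have [N1 hN1] := g_near h1 f x [:: q].
have [N2 hN2] := g_near h2 f x [:: q].
pose N := maxn N1 N2.
have a1 : forall k, (k < N1)%N -> trunc f N k = f k.
  by move=> k hk; rewrite /trunc (leq_trans hk (leq_maxl _ _)).
have a2 : forall k, (k < N2)%N -> trunc f N k = f k.
  by move=> k hk; rewrite /trunc (leq_trans hk (leq_maxr _ _)).
have e : act1 (trunc f N) x = act2 (trunc f N) x by rewrite !g_trunc.
rewrite -(zmod_helper3 (act1 f x) (act1 (trunc f N) x) (act2 f x)).
by apply: ZB; [rewrite e; apply: hN2 | apply: hN1].
Qed.

Lemma ev_list act' F (xs : seq M) : pser_structure op T act' ->
  exists N, forall y, y \in xs -> forall n, (N <= n)%N -> Z F (iter n T y).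
Proof.
move=> hs; elim: xs => [|a xs [N ih]]; first by exists 0.
have [Na hNa] := g_near hs (mono 0 0) a F.
exists (maxn Na N) => y; rewrite in_cons => /orP[/eqP ->|hy] n hn.
  have := hNa (mono n 1); rewrite !(g_mono hs) scale1r scale0r subr0; apply.
  move=> k hk; rewrite /mono; have -> : (k == n) = false.
    by apply/eqP => e; move: hk hn; rewrite e => hk /(leq_trans (leq_maxl _ _)); lia.
  by case: eqP.
by apply: ih => //; apply: leq_trans (leq_maxr _ _) hn.
Qed.

Lemma struct_tz act' : pser_structure op T act' -> tends_to_zero op T.
Proof.
move=> hs; have hs' := hs; case: hs' => [[D1 D2 D3 D4 D5] [Dt Dc]].
move=> L L' hL hL'.
have [F hF] := lattice_Zsub hL.
have h := Dc _ (open_Z F 0).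
have := h (mono 0 0, 0); rewrite /= (g_mono hs) scale0r subrr.
move=> /(_ (Z0 F)) [U [V [hU hV U0 V0 hUV]]].
have [N hN] := hU _ U0.
have [G hG] := open_char hV V0.
have S6 : forall n, (N <= n)%N -> forall z, Z G z -> Z F (iter n T z).
  move=> n hn z hz.
  have := hUV (mono n 1, z); rewrite /= (g_mono hs) scale1r subr0; apply.
    apply: hN => k hk; rewrite /mono; have -> : (k == n) = false.
      by apply/eqP => e; move: hk hn; rewrite e; lia.
    by case: eqP.
  by apply: hG; rewrite subr0.
case: hL' => [[sL0 sLD sLZ] oL' fgL'].
pose U' := fun m => L' m /\ Z G m.
have sU' : submod U'.
  split; first by split; [|apply: Z0].
  - by move=> a b [h1 h2] [h3 h4]; split; [apply: sLD | apply: ZD].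
  - by move=> r a [h1 h2]; split; [apply: sLZ | apply: ZZ].
have oU' : op U'.
  apply: open_and => //; apply: open_ext (open_Z G 0) => m; rewrite subr0.
  by split.
have [xs [hxs hdec]] := fgL' U' sU' oU' (fun m h => h.1).
have [Nx hNx] := ev_list F xs hs.
exists (maxn N Nx) => n hn x hx; apply: hF.
have [c [u [_ hu] ->]] := hdec x hx.
rewrite iterD' iter_sum; apply: ZD.
  apply: Zsum => k; rewrite iterZ'; apply: ZZ; apply: hNx.
    by apply: mem_nth.
  by apply: leq_trans (leq_maxr _ _) (ltnW hn).
by apply: S6 => //; apply: leq_trans (leq_maxl _ _) (ltnW hn).
Qed.

Lemma main_equiv : projective Q ->
  (tends_to_zero op T <->
   exists act : (nat -> R) -> M -> M,
     pser_structure op T act /\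
     forall act', pser_structure op T act' -> forall f x, act' f x = act f x).
Proof.
move=> pQ; split; last by move=> [a [hs _]]; apply: struct_tz hs.
move=> tz.
have hA := tzA pQ tz.
have hB := tzB pQ tz.
have hst : pser_structure op T act.
  split; split.
  - by move=> f x y; apply: actDx.
  - by move=> f g x; apply: actDf.
  - by move=> f g x; apply: act_mul.
  - by move=> x; have := act_mono 0 1 x; rewrite scale1r.
  - by move=> r x; have := act_mono 0 r x.
  - by move=> x; have := act_mono 1 1 x; rewrite scale1r.
  - by apply: act_cont.
exists act; split=> // act' h' f x.
exact: uniq_struct h' hst f x.
Qed.

End WithT.
End Main.

Local Close Scope ring_scope.

Theorem lemma3p9 (R : pzRingType) (M : lmodType R) (op : (M -> Prop) -> Prop)
  (T : {linear M -> M}) :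
  tate op -> cont op op T ->
  (tends_to_zero op T <->
   exists act : (nat -> R) -> M -> M,
     pser_structure op T act /\
     forall act', pser_structure op T act' -> forall f x, act' f x = act f x).
Proof.
move=> [topM [P [Q [i [p [[_ pQ idual ilin plin] [icont pcont pi]]]]]]] Tcont.
exact: (main_equiv topM idual ilin plin icont pcont pi Tcont pQ).
Qed.
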